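(* Let $\mathbf{k}$ be a commutative ring in which $2$ is invertible and $A$ a $\mathbf{k}$-superalgebra. Then there are equivalences of supercategories $$\mathrm{Mod}(A\otimes_{\mathbf{k}}\mathcal{C}\ell_1)\simeq(\mathrm{Mod}(A)^{ct})^{rev},\qquad \mathrm{Mod}(A\otimes_{\mathbf{k}}\mathcal{C}\ell_1)\simeq\mathrm{Mod}_{\mathrm{super}}(A),\qquad \mathrm{Mod}(A\otimes_{\mathbf{k}}\mathcal{C}\ell_1^-)\simeq(\mathrm{Mod}(A)^{rev})^{ct}.$$
   Context: $\mathcal{C}\ell_1$ is the superalgebra generated by one odd element $C_1$ with $C_1^2=1$; $\mathcal{C}\ell_1^-$ is generated by one odd $C_1$ with $C_1^2=-1$. Tensor products of superalgebras use the sign rule $(a_1\otimes b_1)(a_2\otimes b_2)=(-1)^{|b_1||a_2|}a_1a_2\otimes b_1b_2$. For a superalgebra $B$ with $\phi_B(b)=(-1)^\epsilon b$ on $B_\epsilon$, $\mathrm{Mod}(B)$ is the category of left $B$-modules, a supercategory with $\Pi M=\{\pi(x)\}$, $b\pi(x)=\pi(\phi_B(b)x)$, $\xi_M(\pi\pi(x))=x$; $\mathrm{Mod}_{\mathrm{super}}(B)$ is the category of $B$-supermodules with even morphisms, $\Pi$ the parity shift and the same $\xi$. A supercategory is a $\mathbf{k}$-linear additive category with endofunctor $\Pi$ and $\xi:\Pi^2\xrightarrow\sim\mathrm{id}$, $\xi\Pi=\Pi\xi$; a superfunctor is $(F,\alpha_F)$ with $\alpha_F:F\Pi\xrightarrow\sim\Pi'F$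 and $(\xi'F)(\Pi'\alpha_F)(\alpha_F\Pi)=F\xi$; an equivalence of supercategories is a superfunctor whose functor is an equivalence. $\mathcal{C}^{rev}=(\mathcal{C},\Pi,-\xi)$. The Clifford twist $\mathcal{C}^{ct}$ has objects $(X,\varphi)$, $\varphi:\Pi X\xrightarrow\sim X$ with $\varphi\circ\Pi\varphi=\xi_X$, morphisms $f$ with $f\varphi=\varphi'\Pi f$, $\Pi^{ct}(X,\varphi)=(X,-\varphi)$, $\xi^{ct}=\mathrm{id}$. *)

(* Defs.v *)
From Stdlib Require Import ProofIrrelevance FunctionalExtensionality.
From HB Require Import structures.
From mathcomp Require Import all_boot all_algebra.
Set Implicit Arguments. Unset Strict Implicit. Unset Printing Implicit Defensive.
Import GRing.Theory.
Local Open Scope ring_scope.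

Lemma sig_ext (T : Type) (P : T -> Prop) (x y : {a | P a}) :
  proj1_sig x = proj1_sig y -> x = y.
Proof.
case: x => a Pa; case: y => b Pb /= eab; subst b; f_equal; apply: proof_irrelevance.
Qed.

Section Super.
Variable k : comPzRingType.

Record superAlg := SuperAlg {
  sa_car :> lmodType k;
  sa_mul : sa_car -> sa_car -> sa_car;
  sa_one : sa_car;
  sa_ev : sa_car -> sa_car;
  sa_od : sa_car -> sa_car }.

Record is_superalg (A : superAlg) : Prop := IsSuperalg {
  sa_mulA : forall a b c : A, sa_mul a (sa_mul b c) = sa_mul (sa_mul a b) c;
  sa_mul1l : forall a : A, sa_mul (sa_one A) a = a;
  sa_mul1r : forall a : A, sa_mul a (sa_one A) = a;
  sa_mulDl : forall a b x : A, sa_mul (a + b) x = sa_mul a x + sa_mul b x;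
  sa_mulZl : forall (c : k) (a x : A), sa_mul (c *: a) x = c *: sa_mul a x;
  sa_mulDr : forall a b x : A, sa_mul x (a + b) = sa_mul x a + sa_mul x b;
  sa_mulZr : forall (c : k) (a x : A), sa_mul x (c *: a) = c *: sa_mul x a;
  sa_evD : forall a b : A, sa_ev (a + b) = sa_ev a + sa_ev b;
  sa_evZ : forall (c : k) (a : A), sa_ev (c *: a) = c *: sa_ev a;
  sa_odD : forall a b : A, sa_od (a + b) = sa_od a + sa_od b;
  sa_odZ : forall (c : k) (a : A), sa_od (c *: a) = c *: sa_od a;
  sa_evod : forall a : A, sa_ev a + sa_od a = a;
  sa_evev : forall a : A, sa_ev (sa_ev a) = sa_ev a;
  sa_odod : forall a : A, sa_od (sa_od a) = sa_od a;
  sa_evo : forall a : A, sa_ev (sa_od a) = 0;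
  sa_ode : forall a : A, sa_od (sa_ev a) = 0;
  sa_ev1 : sa_ev (sa_one A) = sa_one A;
  sa_m00 : forall a b : A,
    sa_ev (sa_mul (sa_ev a) (sa_ev b)) = sa_mul (sa_ev a) (sa_ev b);
  sa_m01 : forall a b : A,
    sa_od (sa_mul (sa_ev a) (sa_od b)) = sa_mul (sa_ev a) (sa_od b);
  sa_m10 : forall a b : A,
    sa_od (sa_mul (sa_od a) (sa_ev b)) = sa_mul (sa_od a) (sa_ev b);
  sa_m11 : forall a b : A,
    sa_ev (sa_mul (sa_od a) (sa_od b)) = sa_mul (sa_od a) (sa_od b) }.

Definition sphi (A : superAlg) (a : A) : A := sa_ev a - sa_od a.

Record phi_props (A : superAlg) : Prop := PhiProps {
  phiD : forall a b : A, sphi (a + b) = sphi a + sphi b;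
  phiZ : forall (c : k) (a : A), sphi (c *: a) = c *: sphi a;
  phiM : forall a b : A, sphi (sa_mul a b) = sa_mul (sphi a) (sphi b);
  phi1 : sphi (sa_one A) = sa_one A;
  phiK : forall a : A, sphi (sphi a) = a }.

End Super.


Section SuperAlgTheory.
Variables (k : comPzRingType) (A : superAlg k) (HA : is_superalg A).
Local Notation mul := (@sa_mul k A).
Local Notation ev := (@sa_ev k A).
Local Notation od := (@sa_od k A).

Lemma sa_ev0 : ev 0 = 0.
Proof. by have := sa_evZ HA 0 0; rewrite !scale0r. Qed.
Lemma sa_od0 : od 0 = 0.
Proof. by have := sa_odZ HA 0 0; rewrite !scale0r. Qed.
Lemma sa_evN (a : A) : ev (- a) = - ev a.
Proof. by rewrite -scaleN1r sa_evZ // scaleN1r. Qed.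
Lemma sa_odN (a : A) : od (- a) = - od a.
Proof. by rewrite -scaleN1r sa_odZ // scaleN1r. Qed.
Lemma sa_mulNl (a x : A) : mul (- a) x = - mul a x.
Proof. by rewrite -scaleN1r sa_mulZl // scaleN1r. Qed.
Lemma sa_mulNr (a x : A) : mul x (- a) = - mul x a.
Proof. by rewrite -scaleN1r sa_mulZr // scaleN1r. Qed.
Lemma sa_even (x : A) : ev x = x -> sphi x = x.
Proof.
move=> ex; rewrite /sphi; have h := sa_evod HA x; rewrite ex in h.
have h0 : od x = 0 by apply: (@addrI _ x); rewrite addr0.
by rewrite h0 ex subr0.
Qed.
Lemma sa_odd (x : A) : od x = x -> sphi x = - x.
Proof.
move=> ox; rewrite /sphi; have h := sa_evod HA x; rewrite ox in h.
have h0 : ev x = 0 by apply: (@addIr _ x); rewrite add0r.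
by rewrite h0 ox sub0r.
Qed.
Lemma sphiD (a b : A) : sphi (a + b) = sphi a + sphi b.
Proof. by rewrite /sphi sa_evD // sa_odD // opprD addrACA. Qed.
Lemma sphiZ (c : k) (a : A) : sphi (c *: a) = c *: sphi a.
Proof. by rewrite /sphi sa_evZ // sa_odZ // scalerBr. Qed.
Lemma sphiN (a : A) : sphi (- a) = - sphi a.
Proof. by rewrite -scaleN1r sphiZ scaleN1r. Qed.
Lemma sphiK (a : A) : sphi (sphi a) = a.
Proof.
rewrite /sphi sa_evD // sa_odD // sa_evN sa_odN sa_evev // sa_evo // sa_ode //.
by rewrite sa_odod // oppr0 addr0 add0r opprK sa_evod.
Qed.
Lemma sphi1 : sphi (sa_one A) = sa_one A.
Proof. by apply: sa_even; apply: sa_ev1. Qed.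
Lemma sphiM (a b : A) : sphi (mul a b) = mul (sphi a) (sphi b).
Proof.
rewrite -{1}(sa_evod HA a) -{1}(sa_evod HA b).
rewrite !sa_mulDl // !sa_mulDr // !sphiD.
rewrite (sa_even (sa_m00 HA a b)) (sa_odd (sa_m01 HA a b)).
rewrite (sa_odd (sa_m10 HA a b)) (sa_even (sa_m11 HA a b)).
by rewrite /sphi !sa_mulNl !sa_mulNr opprK.
Qed.
Lemma sa_phi : phi_props A.
Proof.
by split; [exact: sphiD | exact: sphiZ | exact: sphiM | exact: sphi1 | exact: sphiK].
Qed.
Lemma sphi_ev (a : A) : sphi (ev a) = ev a.
Proof. by apply: sa_even; apply: sa_evev. Qed.
Lemma sphi_od (a : A) : sphi (od a) = - od a.
Proof. by apply: sa_odd; apply: sa_odod. Qed.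
End SuperAlgTheory.

(* The tensor product A (x)_k Cl_1^s, s = 1 (Cl_1) or s = -1 (Cl_1^-).   *)
(* As a k-module, A (x) Cl = A (x) 1 (+) A (x) C_1 = A * A, the pair     *)
(* (a, b) standing for a (x) 1 + b (x) C_1.  By the sign rule             *)
(*   (a1 (x) 1 + b1 (x) C)(a2 (x) 1 + b2 (x) C)                          *)
(*     = (a1 a2 + s b1 phi(b2)) (x) 1 + (a1 b2 + b1 phi(a2)) (x) C,       *)
(* and |a (x) 1| = |a|, |b (x) C| = |b| + 1.                              *)
Section Tensor.
Variables (k : comPzRingType) (s : k) (A : superAlg k).
Local Notation mul := (@sa_mul k A).
Local Notation ev := (@sa_ev k A).
Local Notation od := (@sa_od k A).

Definition tens_car : lmodType k := (A * A)%type.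
Definition tens_mul (x y : tens_car) : tens_car :=
  (mul x.1 y.1 + s *: mul x.2 (sphi y.2), mul x.1 y.2 + mul x.2 (sphi y.1)).
Definition tens_one : tens_car := (sa_one A, 0).
Definition tens_ev (x : tens_car) : tens_car := (ev x.1, od x.2).
Definition tens_od (x : tens_car) : tens_car := (od x.1, ev x.2).
Definition tens : superAlg k :=
  SuperAlg tens_mul tens_one tens_ev tens_od.

Lemma tens_phiE (x : tens) : sphi x = (sphi x.1, - sphi x.2).
Proof. by case: x => a b; rewrite /sphi /=; congr pair; rewrite opprB. Qed.

Lemma tens_phi (HA : is_superalg A) : phi_props tens.
Proof.
split.
- move=> [a1 b1] [a2 b2]; rewrite !tens_phiE /=.
  by rewrite (sphiD HA) (sphiD HA) opprD.
- move=> c [a b]; rewrite !tens_phiE /=.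
  by rewrite (sphiZ HA) (sphiZ HA) -scalerN.
- move=> [a1 b1] [a2 b2]; rewrite !tens_phiE /=.
  rewrite /tens_mul /=.
  rewrite (sphiD HA) (sphiD HA) (sphiZ HA) !(sphiM HA) !(sphiK HA).
  rewrite !(sa_mulNl HA) !(sa_mulNr HA) !(sphiN HA).
  rewrite (sphiK HA) (sa_mulNr HA).
  by rewrite opprK opprD.
- rewrite /sphi /= /tens_ev /tens_od /tens_one /=.
  have e1 := sa_ev1 HA; have h := sa_evod HA (sa_one A); rewrite e1 in h.
  have -> : sa_od (sa_one A) = 0.
    by apply: (@addrI _ (sa_one A)); rewrite addr0.
  by rewrite (sa_ev0 HA) (sa_od0 HA) e1 subr0.
- by move=> [a b]; rewrite !tens_phiE /= (sphiN HA) !(sphiK HA) opprK.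
Qed.
End Tensor.

Record supercat (k : comPzRingType) := SuperCat {
  Ob : Type;
  Hom : Ob -> Ob -> Type;
  idm : forall X, Hom X X;
  comp : forall X Y Z, Hom Y Z -> Hom X Y -> Hom X Z;
  hadd : forall X Y, Hom X Y -> Hom X Y -> Hom X Y;
  hscale : forall X Y, k -> Hom X Y -> Hom X Y;
  Pi : Ob -> Ob;
  Pim : forall X Y, Hom X Y -> Hom (Pi X) (Pi Y);
  xi : forall X, Hom (Pi (Pi X)) X;
  comp_assoc : forall X Y Z W (h : Hom Z W) (g : Hom Y Z) (f : Hom X Y),
    comp h (comp g f) = comp (comp h g) f;
  comp_idl : forall X Y (f : Hom X Y), comp (idm Y) f = f;
  comp_idr : forall X Y (f : Hom X Y), comp f (idm X) = f;
  comp_addl : forall X Y Z (g g' : Hom Y Z) (f : Hom X Y),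
    comp (hadd g g') f = hadd (comp g f) (comp g' f);
  comp_addr : forall X Y Z (g : Hom Y Z) (f f' : Hom X Y),
    comp g (hadd f f') = hadd (comp g f) (comp g f');
  comp_scalel : forall X Y Z (c : k) (g : Hom Y Z) (f : Hom X Y),
    comp (hscale c g) f = hscale c (comp g f);
  comp_scaler : forall X Y Z (c : k) (g : Hom Y Z) (f : Hom X Y),
    comp g (hscale c f) = hscale c (comp g f);
  hscaleA : forall X Y (a b : k) (f : Hom X Y),
    hscale a (hscale b f) = hscale (a * b) f;
  hscale1 : forall X Y (f : Hom X Y), hscale 1 f = f;
  Pim_id : forall X, Pim (idm X) = idm (Pi X);
  Pim_comp : forall X Y Z (g : Hom Y Z) (f : Hom X Y),
    Pim (comp g f) = comp (Pim g) (Pim f);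
  Pim_add : forall X Y (f g : Hom X Y), Pim (hadd f g) = hadd (Pim f) (Pim g);
  Pim_scale : forall X Y (c : k) (f : Hom X Y), Pim (hscale c f) = hscale c (Pim f)
}.
Arguments Ob {k} s.
Arguments Hom {k} s X Y.
Arguments idm {k s X}.
Arguments comp {k s X Y Z}.
Arguments hadd {k s X Y}.
Arguments hscale {k s X Y}.
Arguments Pi {k s}.
Arguments Pim {k s X Y}.
Arguments xi {k s}.

Definition is_iso (k : comPzRingType) (C : supercat k) (X Y : Ob C)
  (f : Hom C X Y) : Prop :=
  exists g : Hom C Y X, comp g f = idm /\ comp f g = idm.

Record is_superequiv (k : comPzRingType) (C D : supercat k)
  (F0 : Ob C -> Ob D) (F1 : forall X Y, Hom C X Y -> Hom D (F0 X) (F0 Y))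
  (alpha : forall X, Hom D (F0 (Pi X)) (Pi (F0 X))) : Prop := IsSuperequiv {
  sf_id : forall X, F1 X X idm = idm;
  sf_comp : forall X Y Z (g : Hom C Y Z) (f : Hom C X Y),
    F1 X Z (comp g f) = comp (F1 Y Z g) (F1 X Y f);
  sf_add : forall X Y (f g : Hom C X Y), F1 X Y (hadd f g) = hadd (F1 X Y f) (F1 X Y g);
  sf_scale : forall X Y (c : k) (f : Hom C X Y),
    F1 X Y (hscale c f) = hscale c (F1 X Y f);
  sf_nat : forall X Y (f : Hom C X Y),
    comp (alpha Y) (F1 (Pi X) (Pi Y) (Pim f)) = comp (Pim (F1 X Y f)) (alpha X);
  sf_iso : forall X, is_iso (alpha X);
  sf_coh : forall X,
    comp (xi (F0 X)) (comp (Pim (alpha X)) (alpha (Pi X)))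
    = F1 (Pi (Pi X)) X (xi X);
  sf_faithful : forall X Y (f g : Hom C X Y), F1 X Y f = F1 X Y g -> f = g;
  sf_full : forall X Y (h : Hom D (F0 X) (F0 Y)), exists f, F1 X Y f = h;
  sf_esurj : forall Y : Ob D, exists X : Ob C, exists h : Hom D (F0 X) Y, is_iso h
}.

Definition superequivalent (k : comPzRingType) (C D : supercat k) : Prop :=
  exists (F0 : Ob C -> Ob D)
         (F1 : forall X Y, Hom C X Y -> Hom D (F0 X) (F0 Y))
         (alpha : forall X, Hom D (F0 (Pi X)) (Pi (F0 X))),
    is_superequiv F1 alpha.

Definition revC (k : comPzRingType) (C : supercat k) : supercat k :=
  @SuperCat k (Ob C) (Hom C) (@idm k C) (@comp k C) (@hadd k C) (@hscale k C)
    (@Pi k C) (@Pim k C) (fun X => hscale (-1) (xi X))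
    (@comp_assoc k C) (@comp_idl k C) (@comp_idr k C) (@comp_addl k C)
    (@comp_addr k C) (@comp_scalel k C) (@comp_scaler k C) (@hscaleA k C)
    (@hscale1 k C) (@Pim_id k C) (@Pim_comp k C) (@Pim_add k C) (@Pim_scale k C).

Section CliffordTwist.
Variables (k : comPzRingType) (C : supercat k).

Definition ct_ok (X : Ob C) (p : Hom C (Pi X) X) : Prop :=
  is_iso p /\ comp p (Pim p) = xi X.
Definition ct_ob := {X : Ob C & {p : Hom C (Pi X) X | ct_ok p}}.
Definition ct_base (O : ct_ob) : Ob C := projT1 O.
Definition ct_phi (O : ct_ob) : Hom C (Pi (ct_base O)) (ct_base O) :=
  proj1_sig (projT2 O).
Definition ct_hom (O O' : ct_ob) :=
  {f : Hom C (ct_base O) (ct_base O') | comp f (ct_phi O) = comp (ct_phi O') (Pim f)}.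

Lemma hscaleNN (X Y : Ob C) (f : Hom C X Y) : hscale (-1) (hscale (-1) f) = f.
Proof. by rewrite hscaleA mulrNN mulr1 hscale1. Qed.

Lemma ct_ok_neg (X : Ob C) (p : Hom C (Pi X) X) :
  ct_ok p -> ct_ok (hscale (-1) p).
Proof.
case=> [[g [h1 h2]] h3]; split.
  exists (hscale (-1) g).
  by rewrite !comp_scalel !comp_scaler !hscaleNN h1 h2.
by rewrite Pim_scale comp_scalel comp_scaler hscaleNN.
Qed.

Definition ct_Pi (O : ct_ob) : ct_ob :=
  existT _ (ct_base O)
    (exist _ (hscale (-1) (ct_phi O)) (ct_ok_neg (proj2_sig (projT2 O)))).

Definition ct_idm (O : ct_ob) : ct_hom O O.
Proof. by exists idm; rewrite Pim_id comp_idl comp_idr. Defined.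

Definition ct_comp (O1 O2 O3 : ct_ob) (g : ct_hom O2 O3) (f : ct_hom O1 O2) :
  ct_hom O1 O3.
Proof.
exists (comp (proj1_sig g) (proj1_sig f)).
rewrite -comp_assoc (proj2_sig f) comp_assoc (proj2_sig g).
by rewrite -comp_assoc Pim_comp.
Defined.

Definition ct_hadd (O O' : ct_ob) (f g : ct_hom O O') : ct_hom O O'.
Proof.
exists (hadd (proj1_sig f) (proj1_sig g)).
by rewrite comp_addl Pim_add comp_addr (proj2_sig f) (proj2_sig g).
Defined.

Definition ct_hscale (O O' : ct_ob) (c : k) (f : ct_hom O O') : ct_hom O O'.
Proof.
exists (hscale c (proj1_sig f)).
by rewrite comp_scalel Pim_scale comp_scaler (proj2_sig f).
Defined.

Definition ct_Pim (O O' : ct_ob) (f : ct_hom O O') : ct_hom (ct_Pi O) (ct_Pi O').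
Proof.
exists (proj1_sig f); rewrite /ct_Pi /ct_phi /=.
by rewrite comp_scaler comp_scalel (proj2_sig f).
Defined.

Definition ct_xi (O : ct_ob) : ct_hom (ct_Pi (ct_Pi O)) O.
Proof.
exists idm; rewrite /ct_Pi /ct_phi /=.
by rewrite hscaleNN Pim_id comp_idl comp_idr.
Defined.

Definition ct : supercat k.
Proof.
refine (@SuperCat k ct_ob ct_hom ct_idm ct_comp ct_hadd ct_hscale
          ct_Pi ct_Pim ct_xi _ _ _ _ _ _ _ _ _ _ _ _ _).
- by move=> *; apply: sig_ext; rewrite /= comp_assoc.
- by move=> *; apply: sig_ext; rewrite /= comp_idl.
- by move=> *; apply: sig_ext; rewrite /= comp_idr.
- by move=> *; apply: sig_ext; rewrite /= comp_addl.
- by move=> *; apply: sig_ext; rewrite /= comp_addr.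
- by move=> *; apply: sig_ext; rewrite /= comp_scalel.
- by move=> *; apply: sig_ext; rewrite /= comp_scaler.
- by move=> *; apply: sig_ext; rewrite /= hscaleA.
- by move=> *; apply: sig_ext; rewrite /= hscale1.
- by move=> *; apply: sig_ext.
- by move=> *; apply: sig_ext.
- by move=> *; apply: sig_ext.
- by move=> *; apply: sig_ext.
Defined.
End CliffordTwist.

(* Pi M = {pi(x)} with b pi(x) = pi(phi_B(b) x) (modelled on the same     *)
Section Modules.
Variables (k : comPzRingType) (B : superAlg k) (HB : phi_props B).

Record is_module (M : lmodType k) (act : B -> M -> M) : Prop := IsModule {
  act_addl : forall (a b : B) (m : M), act (a + b) m = act a m + act b m;
  act_scalel : forall (c : k) (a : B) (m : M), act (c *: a) m = c *: act a m;
  act_addr : forall (a : B) (m n : M), act a (m + n) = act a m + act a n;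
  act_scaler : forall (c : k) (a : B) (m : M), act a (c *: m) = c *: act a m;
  act_mul : forall (a b : B) (m : M), act (sa_mul a b) m = act a (act b m);
  act_one : forall m : M, act (sa_one B) m = m }.

Record smodule := SModule {
  sm_car :> lmodType k;
  sm_act : B -> sm_car -> sm_car;
  sm_ax : is_module sm_act }.

Definition is_mhom (M N : smodule) (f : M -> N) : Prop :=
  [/\ forall x y : M, f (x + y) = f x + f y,
      forall (c : k) (x : M), f (c *: x) = c *: f x
    & forall (b : B) (x : M), f (sm_act b x) = sm_act b (f x)].

Definition mhom (M N : smodule) := {f : M -> N | is_mhom f}.

Definition mhom_id (M : smodule) : mhom M M.
Proof. by exists id. Defined.

Definition mhom_comp (M N P : smodule) (g : mhom N P) (f : mhom M N) : mhom M P.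
Proof.
exists (fun x => proj1_sig g (proj1_sig f x)).
case: (proj2_sig f) => f1 f2 f3; case: (proj2_sig g) => g1 g2 g3.
by split=> *; rewrite ?f1 ?g1 ?f2 ?g2 ?f3 ?g3.
Defined.

Definition mhom_add (M N : smodule) (f g : mhom M N) : mhom M N.
Proof.
exists (fun x => proj1_sig f x + proj1_sig g x).
case: (proj2_sig f) => f1 f2 f3; case: (proj2_sig g) => g1 g2 g3.
split=> *; first by rewrite f1 g1 addrACA.
  by rewrite f2 g2 scalerDr.
by rewrite f3 g3 (act_addr (sm_ax N)).
Defined.

Definition mhom_scale (M N : smodule) (c : k) (f : mhom M N) : mhom M N.
Proof.
exists (fun x => c *: proj1_sig f x).
case: (proj2_sig f) => f1 f2 f3.
split=> *; first by rewrite f1 scalerDr.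
  by rewrite f2 !scalerA mulrC.
by rewrite f3 (act_scaler (sm_ax N)).
Defined.

Lemma Pi_module_ax (M : smodule) :
  is_module (fun b : B => sm_act (sphi b) : M -> M).
Proof.
case: (sm_ax M) => h1 h2 h3 h4 h5 h6; split=> *.
- by rewrite (phiD HB) h1.
- by rewrite (phiZ HB) h2.
- by rewrite h3.
- by rewrite h4.
- by rewrite (phiM HB) h5.
- by rewrite (phi1 HB) h6.
Qed.

Definition Pi_mod (M : smodule) : smodule := SModule (Pi_module_ax M).

Definition Pi_mhom (M N : smodule) (f : mhom M N) : mhom (Pi_mod M) (Pi_mod N).
Proof.
exists (proj1_sig f).
by case: (proj2_sig f) => f1 f2 f3; split=> *; rewrite ?f1 ?f2 ?f3.
Defined.

Definition xi_mhom (M : smodule) : mhom (Pi_mod (Pi_mod M)) M.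
Proof.
exists (fun x : M => x); split=> // b x /=.
by rewrite (phiK HB).
Defined.

Definition ModCat : supercat k.
Proof.
refine (@SuperCat k smodule mhom mhom_id mhom_comp mhom_add mhom_scale
          Pi_mod Pi_mhom xi_mhom _ _ _ _ _ _ _ _ _ _ _ _ _).
- by move=> *; apply: sig_ext.
- by move=> *; apply: sig_ext.
- by move=> *; apply: sig_ext.
- by move=> *; apply: sig_ext.
- move=> X Y Z g f f'; apply: sig_ext; apply: functional_extensionality => x /=.
  by case: (proj2_sig g) => g1 _ _; rewrite g1.
- by move=> *; apply: sig_ext.
- move=> X Y Z c g f; apply: sig_ext; apply: functional_extensionality => x /=.
  by case: (proj2_sig g) => _ g2 _; rewrite g2.
- move=> X Y a b f; apply: sig_ext; apply: functional_extensionality => x /=.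
  by rewrite scalerA.
- move=> X Y f; apply: sig_ext; apply: functional_extensionality => x /=.
  by rewrite scale1r.
- by move=> *; apply: sig_ext.
- by move=> *; apply: sig_ext.
- by move=> *; apply: sig_ext.
- by move=> *; apply: sig_ext.
Defined.
End Modules.

Section SuperModules.
Variables (k : comPzRingType) (A : superAlg k) (HA : is_superalg A).
Local Notation HP := (sa_phi HA).

Record is_supmod (M : smodule A) (ev od : M -> M) : Prop := IsSupmod {
  sm_evD : forall x y : M, ev (x + y) = ev x + ev y;
  sm_evZ : forall (c : k) (x : M), ev (c *: x) = c *: ev x;
  sm_odD : forall x y : M, od (x + y) = od x + od y;
  sm_odZ : forall (c : k) (x : M), od (c *: x) = c *: od x;
  sm_evod : forall x : M, ev x + od x = x;
  sm_evev : forall x : M, ev (ev x) = ev x;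
  sm_odod : forall x : M, od (od x) = od x;
  sm_evo : forall x : M, ev (od x) = 0;
  sm_ode : forall x : M, od (ev x) = 0;
  sm_a00 : forall (a : A) (x : M),
    ev (sm_act (sa_ev a) (ev x)) = sm_act (sa_ev a) (ev x);
  sm_a01 : forall (a : A) (x : M),
    od (sm_act (sa_ev a) (od x)) = sm_act (sa_ev a) (od x);
  sm_a10 : forall (a : A) (x : M),
    od (sm_act (sa_od a) (ev x)) = sm_act (sa_od a) (ev x);
  sm_a11 : forall (a : A) (x : M),
    ev (sm_act (sa_od a) (od x)) = sm_act (sa_od a) (od x) }.

Record supmod := SupMod {
  su_mod :> smodule A;
  su_ev : su_mod -> su_mod;
  su_od : su_mod -> su_mod;
  su_ax : is_supmod su_ev su_od }.

Definition is_even (M N : supmod) (f : mhom M N) : Prop :=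
  (forall x : M, su_ev x = x -> su_ev (proj1_sig f x) = proj1_sig f x) /\
  (forall x : M, su_od x = x -> su_od (proj1_sig f x) = proj1_sig f x).

Definition shom (M N : supmod) := {f : mhom M N | is_even f}.

Definition shom_id (M : supmod) : shom M M.
Proof. by exists (mhom_id M). Defined.

Definition shom_comp (M N P : supmod) (g : shom N P) (f : shom M N) : shom M P.
Proof.
exists (mhom_comp (proj1_sig g) (proj1_sig f)).
case: (proj2_sig f) => f1 f2; case: (proj2_sig g) => g1 g2.
by split=> x hx /=; [rewrite g1 // f1 | rewrite g2 // f2].
Defined.

Definition shom_add (M N : supmod) (f g : shom M N) : shom M N.
Proof.
exists (mhom_add (proj1_sig f) (proj1_sig g)).
case: (proj2_sig f) => f1 f2; case: (proj2_sig g) => g1 g2.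
by split=> x hx /=;
  [rewrite (sm_evD (su_ax N)) f1 ?g1 | rewrite (sm_odD (su_ax N)) f2 ?g2].
Defined.

Definition shom_scale (M N : supmod) (c : k) (f : shom M N) : shom M N.
Proof.
exists (mhom_scale c (proj1_sig f)).
case: (proj2_sig f) => f1 f2.
by split=> x hx /=; [rewrite (sm_evZ (su_ax N)) f1 | rewrite (sm_odZ (su_ax N)) f2].
Defined.

Lemma act_N (M : smodule A) (a : A) (x : M) : sm_act (- a) x = - sm_act a x.
Proof. by rewrite -scaleN1r (act_scalel (sm_ax M)) scaleN1r. Qed.

Lemma Pi_supmod_ax (M : supmod) :
  @is_supmod (Pi_mod HP M) (su_od (s:=M)) (su_ev (s:=M)).
Proof.
case: (su_ax M) => h1 h2 h3 h4 h5 h6 h7 h8 h9 h10 h11 h12 h13.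
split=> //= [x|a x|a x|a x|a x].
- by rewrite addrC h5.
- by rewrite (sphi_ev HA) h11.
- by rewrite (sphi_ev HA) h10.
- by rewrite (sphi_od HA) !act_N -scaleN1r h2 h13.
- by rewrite (sphi_od HA) !act_N -scaleN1r h4 h12.
Qed.

Definition Pi_sup (M : supmod) : supmod := SupMod (Pi_supmod_ax M).

Definition Pi_shom (M N : supmod) (f : shom M N) : shom (Pi_sup M) (Pi_sup N).
Proof.
exists (Pi_mhom HP (proj1_sig f)).
by case: (proj2_sig f) => f1 f2; split=> x hx /=; [rewrite f2 | rewrite f1].
Defined.

Definition xi_shom (M : supmod) : shom (Pi_sup (Pi_sup M)) M.
Proof. by exists (xi_mhom HP M). Defined.

Definition ModSuperCat : supercat k.
Proof.
refine (@SuperCat k supmod shom shom_id shom_comp shom_add shom_scale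
          Pi_sup Pi_shom xi_shom _ _ _ _ _ _ _ _ _ _ _ _ _).
- by move=> *; do 2 apply: sig_ext.
- by move=> *; do 2 apply: sig_ext.
- by move=> *; do 2 apply: sig_ext.
- by move=> *; do 2 apply: sig_ext.
- move=> X Y Z g f f'; do 2 apply: sig_ext; apply: functional_extensionality => x /=.
  by case: (proj2_sig (proj1_sig g)) => g1 _ _; rewrite g1.
- by move=> *; do 2 apply: sig_ext.
- move=> X Y Z c g f; do 2 apply: sig_ext; apply: functional_extensionality => x /=.
  by case: (proj2_sig (proj1_sig g)) => _ g2 _; rewrite g2.
- move=> X Y a b f; do 2 apply: sig_ext; apply: functional_extensionality => x /=.
  by rewrite scalerA.
- move=> X Y f; do 2 apply: sig_ext; apply: functional_extensionality => x /=.
  by rewrite scale1r.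
- by move=> *; do 2 apply: sig_ext.
- by move=> *; do 2 apply: sig_ext.
- by move=> *; do 2 apply: sig_ext.
- by move=> *; do 2 apply: sig_ext.
Defined.
End SuperModules.

(* Main.v *)
Require Import Defs.
From Stdlib Require Import ProofIrrelevance FunctionalExtensionality.
From HB Require Import structures.
From mathcomp Require Import all_boot all_algebra.
Set Implicit Arguments. Unset Strict Implicit. Unset Printing Implicit Defensive.
Import GRing.Theory.
Local Open Scope ring_scope.

Section Gen.
Variables (k : comPzRingType) (A : superAlg k) (HA : is_superalg A).
Local Notation HP := (sa_phi HA).
Local Notation mul := (@sa_mul k A).
Local Notation one := (sa_one A).

Lemma mul0l (x : A) : mul 0 x = 0.
Proof. by have := sa_mulZl HA 0 0 x; rewrite !scale0r. Qed.
Lemma mul0r (x : A) : mul x 0 = 0.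
Proof. by have := sa_mulZr HA 0 0 x; rewrite !scale0r. Qed.
Lemma sphi0 : sphi (0 : A) = 0.
Proof. by have := sphiZ HA 0 0; rewrite !scale0r. Qed.

Lemma act0 (M : smodule A) (x : M) : sm_act (0 : A) x = 0.
Proof. by have := act_scalel (sm_ax M) 0 0 x; rewrite !scale0r. Qed.
Lemma actN (B : superAlg k) (M : smodule B) (a : B) (x : M) : sm_act a (- x) = - sm_act a x.
Proof. by rewrite -scaleN1r (act_scaler (sm_ax M)) scaleN1r. Qed.
Lemma actNl (B : superAlg k) (M : smodule B) (a : B) (x : M) : sm_act (- a) x = - sm_act a x.
Proof. by rewrite -scaleN1r (act_scalel (sm_ax M)) scaleN1r. Qed.

Section S.
Variable s : k.
Local Notation T := (tens s A).
Local Notation HT := (tens_phi s HA).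

Definition pr (a b : A) : T := (a, b).

Lemma prD a b c d : pr a b + pr c d = pr (a + c) (b + d).
Proof. by []. Qed.
Lemma prZ (c : k) a b : c *: pr a b = pr (c *: a) (c *: b).
Proof. by []. Qed.
Lemma tm_a0_b0 a b : sa_mul (pr a 0) (pr b 0) = pr (mul a b) 0.
Proof. by rewrite /= /tens_mul /= sphi0 !mul0r mul0l scaler0 !addr0. Qed.
Lemma tm_a0_01 a : sa_mul (pr a 0) (pr 0 one) = pr 0 a.
Proof. by rewrite /= /tens_mul /= sphi0 !mul0r mul0l scaler0 !addr0 (sa_mul1r HA). Qed.
Lemma tm_01_a0 a : sa_mul (pr 0 one) (pr a 0) = pr 0 (sphi a).
Proof. by rewrite /= /tens_mul /= sphi0 !mul0r !mul0l scaler0 addr0 add0r (sa_mul1l HA). Qed.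
Lemma tm_01_01 : sa_mul (pr 0 one) (pr 0 one) = pr (s *: one) 0.
Proof. by rewrite /= /tens_mul /= sphi0 !mul0r !mul0l (sphi1 HA) (sa_mul1l HA) add0r addr0. Qed.
Lemma tphi_a0 a : sphi (pr a 0) = pr (sphi a) 0.
Proof. by rewrite tens_phiE /= sphi0 oppr0. Qed.
Lemma tphi_01 : sphi (pr 0 one) = pr 0 (- one).
Proof. by rewrite tens_phiE /= sphi0 (sphi1 HA). Qed.
Lemma pr_dec a b : pr a b = pr a 0 + sa_mul (pr b 0) (pr 0 one).
Proof. by rewrite tm_a0_01 prD addr0 add0r. Qed.

Section Mod.
Variable M : smodule T.
Definition actA (a : A) (x : M) : M := sm_act (pr a 0) x.
Definition cC (x : M) : M := sm_act (pr 0 one) x.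

Lemma act_dec a b (x : M) : sm_act (pr a b) x = actA a x + actA b (cC x).
Proof. by rewrite {1}pr_dec (act_addl (sm_ax M)) (act_mul (sm_ax M)). Qed.
Lemma cC_act a (x : M) : cC (actA a x) = actA (sphi a) (cC x).
Proof. by rewrite /cC /actA -!(act_mul (sm_ax M)) tm_01_a0 tm_a0_01. Qed.
Lemma cCC (x : M) : cC (cC x) = s *: x.
Proof.
rewrite /cC -(act_mul (sm_ax M)) tm_01_01.
have -> : pr (s *: one) 0 = s *: sa_one T by rewrite /tens_one prZ scaler0.
by rewrite (act_scalel (sm_ax M)) (act_one (sm_ax M)).
Qed.
Lemma cCD (x y : M) : cC (x + y) = cC x + cC y.
Proof. exact: (act_addr (sm_ax M)). Qed.
Lemma cCZ c (x : M) : cC (c *: x) = c *: cC x.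
Proof. exact: (act_scaler (sm_ax M)). Qed.
Lemma cCN (x : M) : cC (- x) = - cC x.
Proof. by rewrite -scaleN1r cCZ scaleN1r. Qed.

Lemma resA_ax : is_module actA.
Proof.
split.
- by move=> a b x; rewrite /actA -(act_addl (sm_ax M)) prD addr0.
- by move=> c a x; rewrite /actA -(act_scalel (sm_ax M)) prZ scaler0.
- by move=> a x y; rewrite /actA (act_addr (sm_ax M)).
- by move=> c a x; rewrite /actA (act_scaler (sm_ax M)).
- by move=> a b x; rewrite /actA -(act_mul (sm_ax M)) tm_a0_b0.
- by move=> x; exact: (act_one (sm_ax M)).
Qed.
Definition resA : smodule A := SModule resA_ax.
End Mod.

Lemma actA_Pi (M : smodule T) a (x : M) :
  actA (M := Pi_mod HT M) a x = actA (M := M) (sphi a) x.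
Proof. by rewrite /actA /= tphi_a0. Qed.
Lemma cC_Pi (M : smodule T) (x : M) : cC (M := Pi_mod HT M) x = - cC (M := M) x.
Proof.
rewrite /cC /= tphi_01.
have -> : pr 0 (- one) = -1 *: pr 0 one by rewrite prZ scaler0 scaleN1r.
by rewrite (act_scalel (sm_ax M)) scaleN1r.
Qed.

Lemma cC_Pi' (M : smodule T) (x : M) : sm_act (s := M) (sphi (pr 0 one)) x = - cC (M := M) x.
Proof. exact: (cC_Pi x). Qed.

Lemma mhom_actA (M N : smodule T) (f : mhom M N) a x :
  proj1_sig f (actA a x) = actA a (proj1_sig f x).
Proof. by case: (proj2_sig f) => _ _ h; rewrite /actA h. Qed.
Lemma mhom_cC (M N : smodule T) (f : mhom M N) x :
  proj1_sig f (cC x) = cC (proj1_sig f x).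
Proof. by case: (proj2_sig f) => _ _ h; rewrite /cC h. Qed.

Definition resA_hom (M N : smodule T) (f : mhom M N) : mhom (resA M) (resA N).
Proof.
exists (proj1_sig f); case: (proj2_sig f) => f1 f2 f3; split => //.
by move=> b x; rewrite /= /actA f3.
Defined.

Definition lift_hom (M N : smodule T) (g : mhom (resA M) (resA N))
  (hg : forall x, proj1_sig g (cC x) = cC (proj1_sig g x)) : mhom M N.
Proof.
exists (proj1_sig g); case: (proj2_sig g) => f1 f2 f3; split => //.
move=> [a b] x; rewrite -/(pr a b) !act_dec f1.
by have := f3 a; have := f3 b; rewrite /= => -> ->; rewrite hg.
Defined.

Section Build.
Variables (N : smodule A) (p : N -> N).
Hypotheses (pD : forall x y, p (x + y) = p x + p y)
  (pZ : forall c x, p (c *: x) = c *: p x)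
  (pA : forall a x, p (sm_act (sphi a) x) = sm_act a (p x))
  (pp : forall x, p (p x) = s *: x).

Lemma pA' a x : p (sm_act a x) = sm_act (sphi a) (p x).
Proof. by rewrite -pA (sphiK HA). Qed.

Definition bact (b : T) (x : N) : N := sm_act b.1 x + sm_act b.2 (p x).

Lemma bact_ax : is_module bact.
Proof.
have [h1 h2 h3 h4 h5 h6] := sm_ax N.
split.
- by move=> [a1 b1] [a2 b2] x; rewrite /bact /= h1 h1 addrACA.
- by move=> c [a b] x; rewrite /bact /= h2 h2 scalerDr.
- by move=> [a b] x y; rewrite /bact /= pD h3 h3 addrACA.
- by move=> c [a b] x; rewrite /bact /= pZ h4 h4 scalerDr.
- move=> [a1 b1] [a2 b2] x; rewrite /bact /= /tens_mul /=.
  rewrite !h1 h2 !h5 pD !pA' pp !h4 !h3 !h4.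
  rewrite -!addrA; congr (_ + _); rewrite addrCA; congr (_ + _).
  by rewrite addrC.
- by move=> x; rewrite /bact /= h6 act0 addr0.
Qed.
Definition bmod : smodule T := SModule bact_ax.

Lemma bmod_actA a (x : bmod) : actA a x = sm_act a (x : N).
Proof. by rewrite /actA /= /bact /= act0 addr0. Qed.
Lemma bmod_cC (x : bmod) : cC x = p x.
Proof. by rewrite /cC /= /bact /= act0 add0r (act_one (sm_ax N)). Qed.
End Build.
End S.

Ltac hom_eq := apply: sig_ext; apply: functional_extensionality => ? /=.
Ltac ct_eq := apply: sig_ext; hom_eq.

Section CtGen.
Variable s : k.
Local Notation T := (tens s A).
Local Notation HT := (tens_phi s HA).

Definition pC (M : smodule T) : mhom (Pi_mod HP (resA M)) (resA M).
Proof.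
exists (@cC s M); split; [exact: cCD | exact: cCZ |].
by move=> b x /=; rewrite cC_act (sphiK HA).
Defined.
Definition qC (e : k) (M : smodule T) : mhom (resA M) (Pi_mod HP (resA M)).
Proof.
exists (fun x => e *: @cC s M x); split.
- by move=> x y; rewrite cCD scalerDr.
- by move=> c x; rewrite cCZ !scalerA mulrC.
- by move=> b x /=; rewrite cC_act (act_scaler (resA_ax M)).
Defined.
Definition aC (M : smodule T) : mhom (resA (Pi_mod HT M)) (resA M).
Proof.
exists (@cC s M); split; [exact: (@cCD s M) | exact: (@cCZ s M) |].
move=> b x /=; rewrite tphi_a0; have := @cC_act s M (sphi b) x; by rewrite (sphiK HA).
Defined.
Definition aCinv (e : k) (M : smodule T) : mhom (resA M) (resA (Pi_mod HT M)).
Proof.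
exists (fun x => e *: @cC s M x); split.
- by move=> x y; rewrite cCD scalerDr.
- by move=> c x; rewrite cCZ !scalerA mulrC.
- by move=> b x /=; rewrite tphi_a0 cC_act /actA (act_scaler (sm_ax M)).
Defined.

Lemma p_props (N : smodule A) (p : mhom (Pi_mod HP N) N) :
  [/\ forall x y, proj1_sig p (x + y) = proj1_sig p x + proj1_sig p y,
      forall c x, proj1_sig p (c *: x) = c *: proj1_sig p x &
      forall a (x : N), proj1_sig p (sm_act (s := N) (sphi a) x) = sm_act a (proj1_sig p x)].
Proof. case: (proj2_sig p) => h1 h2 h3; split; [exact: h1 | exact: h2 | exact: h3]. Qed.

Definition idhom1 (N : smodule A) (p : N -> N) pD pZ pA pp :
  mhom (resA (@bmod s N p pD pZ pA pp)) N.
Proof.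
exists (fun x => x); split => // a x /=; exact: bmod_actA.
Defined.
Definition idhom2 (N : smodule A) (p : N -> N) pD pZ pA pp :
  mhom N (resA (@bmod s N p pD pZ pA pp)).
Proof.
exists (fun x => x); split => // a x /=; symmetry; exact: bmod_actA.
Defined.
End CtGen.

Section Eq1.
Local Notation T := (tens 1 A).
Local Notation HT := (tens_phi 1 HA).
Local Notation C := (ModCat HP).
Local Notation D := (revC (ct C)).

Lemma ok1 (M : smodule T) : ct_ok (C := C) (pC M).
Proof.
split; last by hom_eq; rewrite cCC scale1r.
exists (qC 1 M); split; hom_eq; by rewrite scale1r cCC scale1r.
Qed.
Definition F0_1 (M : smodule T) : Ob D := existT _ (resA M) (exist _ (pC M) (ok1 M)).
Definition F1_1 (M N : smodule T) (f : mhom M N) : Defs.Hom D (F0_1 M) (F0_1 N).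
Proof.
exists (resA_hom f); hom_eq; exact: mhom_cC.
Defined.
Definition al_1 (M : smodule T) : Defs.Hom D (F0_1 (Pi_mod HT M)) (Pi (F0_1 M)).
Proof.
exists (aC M); hom_eq; by rewrite cC_Pi' cCN scaleN1r.
Defined.

Definition al_1inv (M : smodule T) : Defs.Hom D (Pi (F0_1 M)) (F0_1 (Pi_mod HT M)).
Proof.
exists (aCinv 1 M); hom_eq; by rewrite cC_Pi' !scale1r cCZ scaleN1r.
Defined.

Lemma eq1 : superequivalent (ModCat HT) D.
Proof.
exists F0_1, F1_1, al_1; split.
- by move=> X; ct_eq.
- by move=> X Y Z g f; ct_eq.
- by move=> X Y f g; ct_eq.
- by move=> X Y c f; ct_eq.
- by move=> X Y f; ct_eq; rewrite mhom_cC.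
- move=> X; exists (al_1inv X); split; ct_eq; by rewrite ?cC_Pi' scale1r ?cCN cCC ?opprK scale1r.
- by move=> X; ct_eq; rewrite cC_Pi' cCN cCC scale1r scaleN1r opprK.
- move=> X Y f g e; apply: sig_ext.
  exact: (f_equal (fun h => proj1_sig (proj1_sig h)) e).
- move=> X Y h.
  have hg : forall x, proj1_sig (proj1_sig h) (cC x) = cC (proj1_sig (proj1_sig h) x).
    by move=> x; have := f_equal (fun m => proj1_sig m x) (proj2_sig h).
  by exists (lift_hom hg); ct_eq.
- move=> Y; destruct Y as [N [p [hi hpp]]].
  have [pD pZ pA] := p_props p.
  have pp : forall x, proj1_sig p (proj1_sig p x) = 1 *: x.
    by move=> x; rewrite scale1r; have := f_equal (fun m => proj1_sig m x) hpp.
  pose B := @bmod 1 N (proj1_sig p) pD pZ pA pp.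
  pose i1 := @idhom1 1 N (proj1_sig p) pD pZ pA pp.
  pose i2 := @idhom2 1 N (proj1_sig p) pD pZ pA pp.
  exists B.
  have e1 : Defs.comp (s := C) i1 (pC B)
           = Defs.comp (s := C) p (Pim (s := C) i1).
    by hom_eq; rewrite /bact /= act0 add0r (act_one (sm_ax N)).
  exists (exist _ i1 e1).
  have e2 : Defs.comp (s := C) i2 p
           = Defs.comp (s := C) (pC B) (Pim (s := C) i2).
    by hom_eq; rewrite /bact /= act0 add0r (act_one (sm_ax N)).
  by exists (exist _ i2 e2); split; ct_eq.
Qed.
End Eq1.
Section Eq3.
Local Notation T := (tens (-1) A).
Local Notation HT := (tens_phi (-1) HA).
Local Notation C := (ModCat HP).
Local Notation D := (ct (revC C)).

Lemma ok3 (M : smodule T) : ct_ok (C := revC C) (pC M).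
Proof.
split; last by hom_eq; rewrite cCC.
exists (qC (-1) M); split; hom_eq; by rewrite ?cCZ cCC scalerA mulrNN mulr1 scale1r.
Qed.
Definition F0_3 (M : smodule T) : Ob D := existT _ (resA M) (exist _ (pC M) (ok3 M)).
Definition F1_3 (M N : smodule T) (f : mhom M N) : Defs.Hom D (F0_3 M) (F0_3 N).
Proof.
exists (resA_hom f); hom_eq; exact: mhom_cC.
Defined.
Definition al_3 (M : smodule T) : Defs.Hom D (F0_3 (Pi_mod HT M)) (Pi (F0_3 M)).
Proof.
exists (aC M); hom_eq; by rewrite cC_Pi' cCN scaleN1r.
Defined.

Definition al_3inv (M : smodule T) : Defs.Hom D (Pi (F0_3 M)) (F0_3 (Pi_mod HT M)).
Proof.
exists (aCinv (-1) M); hom_eq; by rewrite cC_Pi' !cCZ !scaleN1r.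
Defined.

Lemma eq3 : superequivalent (ModCat HT) D.
Proof.
exists F0_3, F1_3, al_3; split.
- by move=> X; ct_eq.
- by move=> X Y Z g f; ct_eq.
- by move=> X Y f g; ct_eq.
- by move=> X Y c f; ct_eq.
- by move=> X Y f; ct_eq; rewrite mhom_cC.
- move=> X; exists (al_3inv X); split; ct_eq; by rewrite ?cCZ cCC scalerA mulrNN mulr1 scale1r.
- by move=> X; ct_eq; rewrite cC_Pi' cCN cCC scaleN1r opprK.
- move=> X Y f g e; apply: sig_ext.
  exact: (f_equal (fun h => proj1_sig (proj1_sig h)) e).
- move=> X Y h.
  have hg : forall x, proj1_sig (proj1_sig h) (cC x) = cC (proj1_sig (proj1_sig h) x).
    by move=> x; have := f_equal (fun m => proj1_sig m x) (proj2_sig h).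
  by exists (lift_hom hg); ct_eq.
- move=> Y; destruct Y as [N [p [hi hpp]]].
  have [pD pZ pA] := p_props p.
  have pp : forall x, proj1_sig p (proj1_sig p x) = -1 *: x.
    by move=> x; have := f_equal (fun m => proj1_sig m x) hpp.
  pose B := @bmod (-1) N (proj1_sig p) pD pZ pA pp.
  pose i1 := @idhom1 (-1) N (proj1_sig p) pD pZ pA pp.
  pose i2 := @idhom2 (-1) N (proj1_sig p) pD pZ pA pp.
  exists B.
  have e1 : Defs.comp (s := C) i1 (pC B)
           = Defs.comp (s := C) p (Pim (s := C) i1).
    by hom_eq; rewrite /bact /= act0 add0r (act_one (sm_ax N)).
  exists (exist _ i1 e1).
  have e2 : Defs.comp (s := C) i2 p
           = Defs.comp (s := C) (pC B) (Pim (s := C) i2).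
    by hom_eq; rewrite /bact /= act0 add0r (act_one (sm_ax N)).
  by exists (exist _ i2 e2); split; ct_eq.
Qed.
End Eq3.

Section Eq2.
Variables (i : k) (hi : i * 2%:R = 1).
Local Notation T := (tens 1 A).
Local Notation HT := (tens_phi 1 HA).

Lemma half2 (V : lmodType k) (x : V) : i *: (x + x) = x.
Proof. by rewrite -mulr2n -scaler_nat scalerA hi scale1r. Qed.

Section M2.
Variable M : smodule T.
Definition evM (x : M) : M := i *: (x + cC x).
Definition odM (x : M) : M := i *: (x - cC x).

Lemma cC1 (x : M) : cC (cC x) = x.
Proof. by rewrite cCC scale1r. Qed.
Lemma actAN a (x : M) : actA a (- x) = - actA a x.
Proof. exact: (actN (M := M)). Qed.
Lemma actANl a (x : M) : actA (- a) x = - actA a x.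
Proof. by rewrite -scaleN1r (act_scalel (resA_ax M)) scaleN1r. Qed.

Lemma ev_fix (y : M) : cC y = y -> evM y = y /\ odM y = 0.
Proof. by move=> e; rewrite /evM /odM e half2 subrr scaler0. Qed.
Lemma od_fix (y : M) : cC y = - y -> evM y = 0 /\ odM y = y.
Proof. by move=> e; rewrite /evM /odM e subrr opprK half2 scaler0. Qed.
Lemma cC_ev (x : M) : cC (evM x) = evM x.
Proof. by rewrite /evM cCZ cCD cC1 addrC. Qed.
Lemma cC_od (x : M) : cC (odM x) = - odM x.
Proof. by rewrite /odM cCZ cCD cCN cC1 -scalerN opprB addrC. Qed.
Lemma evod (x : M) : evM x + odM x = x.
Proof. by rewrite /evM /odM -scalerDr addrACA subrr addr0 half2. Qed.
Lemma cC_evod (x : M) : cC x = evM x - odM x.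
Proof. by rewrite /evM /odM -scalerBr opprB [cC x - x]addrC addrACA subrr add0r half2. Qed.
Lemma evfix_cC (y : M) : evM y = y -> cC y = y.
Proof. by move=> e; have := cC_ev y; rewrite e. Qed.
Lemma odfix_cC (y : M) : odM y = y -> cC y = - y.
Proof. by move=> e; have := cC_od y; rewrite e. Qed.

Lemma sup_ax : @is_supmod k A (resA M) evM odM.
Proof.
split.
- by move=> x y; rewrite /evM cCD addrACA scalerDr.
- by move=> c x; rewrite /evM cCZ -scalerDr !scalerA mulrC.
- by move=> x y; rewrite /odM cCD opprD addrACA scalerDr.
- by move=> c x; rewrite /odM cCZ -scalerBr !scalerA mulrC.
- exact: evod.
- by move=> x; case: (ev_fix (cC_ev x)).
- by move=> x; case: (od_fix (cC_od x)).
- by move=> x; case: (od_fix (cC_od x)).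
- by move=> x; case: (ev_fix (cC_ev x)).
- move=> a x /=; have e : cC (actA (sa_ev a) (evM x)) = actA (sa_ev a) (evM x).
    by rewrite cC_act (sphi_ev HA) cC_ev.
  by case: (ev_fix e).
- move=> a x /=; have e : cC (actA (sa_ev a) (odM x)) = - actA (sa_ev a) (odM x).
    by rewrite cC_act (sphi_ev HA) cC_od actAN.
  by case: (od_fix e).
- move=> a x /=; have e : cC (actA (sa_od a) (evM x)) = - actA (sa_od a) (evM x).
    by rewrite cC_act (sphi_od HA) cC_ev actANl.
  by case: (od_fix e).
- move=> a x /=; have e : cC (actA (sa_od a) (odM x)) = actA (sa_od a) (odM x).
    by rewrite cC_act (sphi_od HA) cC_od actANl actAN opprK.
  by case: (ev_fix e).
Qed.
Definition F0_2 : supmod A := SupMod sup_ax.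
End M2.

Lemma evPi (M : smodule T) (x : M) : evM (M := Pi_mod HT M) x = odM (M := M) x.
Proof. by rewrite /evM /odM cC_Pi. Qed.
Lemma odPi (M : smodule T) (x : M) : odM (M := Pi_mod HT M) x = evM (M := M) x.
Proof. by rewrite /evM /odM cC_Pi opprK. Qed.

Lemma hom_ev (M N : smodule T) (f : mhom M N) x :
  proj1_sig f (evM x) = evM (proj1_sig f x).
Proof. by case: (proj2_sig f) => f1 f2 _; rewrite /evM f2 f1 mhom_cC. Qed.
Lemma hom_od (M N : smodule T) (f : mhom M N) x :
  proj1_sig f (odM x) = odM (proj1_sig f x).
Proof.
case: (proj2_sig f) => f1 f2 _; rewrite /odM f2 f1 -mhom_cC.
by rewrite -scaleN1r f2 scaleN1r.
Qed.

Local Notation C := (ModCat HT).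
Local Notation D := (ModSuperCat HA).

Definition F1_2 (M N : smodule T) (f : mhom M N) : Defs.Hom D (F0_2 M) (F0_2 N).
Proof.
exists (resA_hom f); split => x /= e.
- by rewrite -hom_ev e.
- by rewrite -hom_od e.
Defined.

Definition idPi1 (M : smodule T) : mhom (resA (Pi_mod HT M)) (Pi_mod HP (resA M)).
Proof.
exists (fun x => x); split => // b x /=; exact: actA_Pi.
Defined.
Definition idPi2 (M : smodule T) : mhom (Pi_mod HP (resA M)) (resA (Pi_mod HT M)).
Proof.
exists (fun x => x); split => // b x /=; symmetry; exact: actA_Pi.
Defined.

Definition al_2 (M : smodule T) : Defs.Hom D (F0_2 (Pi_mod HT M)) (Pi (s := D) (F0_2 M)).
Proof.
exists (idPi1 M); split => x /= e.
- by rewrite -evPi.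
- by rewrite -odPi.
Defined.
Definition al_2inv (M : smodule T) : Defs.Hom D (Pi (s := D) (F0_2 M)) (F0_2 (Pi_mod HT M)).
Proof.
exists (idPi2 M); split => x /= e.
- by rewrite evPi.
- by rewrite odPi.
Defined.

Ltac sh_eq := apply: sig_ext; apply: sig_ext; apply: functional_extensionality => ? /=.

Lemma eq2 : superequivalent C D.
Proof.
exists F0_2, F1_2, al_2; split.
- by move=> X; sh_eq.
- by move=> X Y Z g f; sh_eq.
- by move=> X Y f g; sh_eq.
- by move=> X Y c f; sh_eq.
- by move=> X Y f; sh_eq.
- by move=> X; exists (al_2inv X); split; sh_eq.
- by move=> X; sh_eq.
- move=> X Y f g e; apply: sig_ext.
  exact: (f_equal (fun h => proj1_sig (proj1_sig h)) e).
- move=> X Y h.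
  case: h => g [he ho].
  have hg : forall x, proj1_sig g (cC x) = cC (proj1_sig g x).
    move=> x; case: (proj2_sig g) => g1 g2 _.
    have E1 : cC (proj1_sig g (evM x)) = proj1_sig g (evM x).
      exact: evfix_cC (he _ (proj1 (ev_fix (cC_ev x)))).
    have E2 : cC (proj1_sig g (odM x)) = - proj1_sig g (odM x).
      exact: odfix_cC (ho _ (proj2 (od_fix (cC_od x)))).
    have -> : cC (proj1_sig g x) = proj1_sig g (evM x) - proj1_sig g (odM x).
      by rewrite -{1}(evod x) g1 cCD E1 E2.
    have gN : forall y, proj1_sig g (- y) = - proj1_sig g y by move=> y; rewrite -scaleN1r g2 scaleN1r.
    by rewrite cC_evod g1 gN.
  by exists (lift_hom hg); sh_eq.
- move=> Y.
  have [h1 h2 h3 h4 h5 h6 h7 h8 h9 h10 h11 h12 h13] := su_ax Y.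
  pose N := su_mod Y.
  pose p (x : N) : N := su_ev x - su_od x.
  have pD : forall x y, p (x + y) = p x + p y.
    by move=> x y; rewrite /p h1 h3 opprD addrACA.
  have pZ : forall c x, p (c *: x) = c *: p x.
    by move=> c x; rewrite /p h2 h4 scalerBr.
  have pN : forall x, p (- x) = - p x.
    by move=> x; rewrite -scaleN1r pZ scaleN1r.
  have even_p : forall y, su_ev y = y -> p y = y.
    by move=> y e; rewrite /p e; have := h9 y; rewrite e => ->; rewrite subr0.
  have odd_p : forall y, su_od y = y -> p y = - y.
    by move=> y e; rewrite /p e; have := h8 y; rewrite e => ->; rewrite sub0r.
  have pA' : forall b (x : N), p (sm_act b x) = sm_act (sphi b) (p x).
    move=> b x.
    have [a1 a2 a3 a4 a5 a6] := sm_ax N.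
    rewrite -{1}(sa_evod HA b) -{1}(h5 x) a1 !a3 !pD.
    rewrite (even_p _ (h10 _ _)) (odd_p _ (h11 _ _)) (odd_p _ (h12 _ _)).
    rewrite (even_p _ (h13 _ _)).
    rewrite /sphi !a1 !(actNl (M := N)) !(actN (M := N)) opprK.
    by rewrite addrACA.
  have pA : forall a (x : N), p (sm_act (sphi a) x) = sm_act a (p x).
    by move=> a x; rewrite pA' (sphiK HA).
  have pp : forall x, p (p x) = 1 *: x.
    move=> x; rewrite scale1r {2}/p pD pN (even_p _ (h6 x)) (odd_p _ (h7 x)).
    by rewrite opprK h5.
  pose B := @bmod 1 N p pD pZ pA pp.
  have evB : forall y : B, evM y = su_ev (s := Y) y.
    move=> y; rewrite /evM bmod_cC /p -{1}(h5 y) addrACA subrr addr0.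
    exact: half2.
  have odB : forall y : B, odM y = su_od (s := Y) y.
    move=> y; rewrite /odM bmod_cC /p -{1}(h5 y) opprB [su_od y - _]addrC.
    by rewrite addrACA subrr add0r half2.
  exists B.
  have e1 : is_even (M := F0_2 B) (N := Y) (@idhom1 1 N p pD pZ pA pp).
    by split=> y e /=; [rewrite -evB | rewrite -odB].
  exists (exist _ _ e1).
  have e2 : is_even (M := Y) (N := F0_2 B) (@idhom2 1 N p pD pZ pA pp).
    by split=> y e /=; [rewrite evB | rewrite odB].
  by exists (exist _ _ e2); split; sh_eq.
Qed.
End Eq2.
End Gen.

Theorem mainTheorem13 (k : comPzRingType) (two_unit : exists i : k, i * 2%:R = 1)
  (A : superAlg k) (HA : is_superalg A) :
  superequivalent (ModCat (tens_phi 1 HA)) (revC (ct (ModCat (sa_phi HA))))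
  /\ superequivalent (ModCat (tens_phi 1 HA)) (ModSuperCat HA)
  /\ superequivalent (ModCat (tens_phi (-1) HA)) (ct (revC (ModCat (sa_phi HA)))).
Proof.
case: two_unit => i hi.
split; first exact: (eq1 HA).
split; first exact: (@eq2 _ _ HA i hi).
exact: (eq3 HA).
Qed.
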